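(* Let $m$ be a string transduction. Then $m$ is realized by a finite visit 2gsm if and only if $m$ is realized by a 2gsm and $m$ is finitary.
   Context: A 2gsm is $M=(Q,\Sigma_1,\Sigma_2,\delta,q_{in},q_f)$ with finite state set $Q$ and instructions $(p,\sigma,q_1,\alpha_1,\epsilon_1,q_0,\alpha_0,\epsilon_0)$, $p\neq q_f$, $\sigma\in\Sigma_1\cup\{\vdash,\dashv\}$, $\alpha_i\in\Sigma_2^*$, $\epsilon_i\in\{-1,0,+1\}$. On input $w$ the read-only tape is $\vdash w\dashv$ (positions $0..|w|+1$); start in $q_{in}$ at position 0; in state $p$ any instruction starting with $p$ may be executed: if the scanned symbol is $\sigma$, go to $q_1$, append $\alpha_1$ to the one-way output tape and move by $\epsilon_1$, else do the same with $(q_0,\alpha_0,\epsilon_0)$; the head may not leave the tape. $M$ realizes the relation of all $(w,z)$ such that some computation reaches $q_f$ having written $z$ (a successful computation for $(w,z)$). A computation is $k$-visiting if each tape position is visited at most $k$ times. $M$ is finite visit if there is a constant $k$ such that for every pair $(w,z)$ in the relation realized by $M$ there is a $k$-visiting successful computation for $(w,z)$. A relation $m$ is finitary if $\{z\mid(w,z)\in m\}$ is finite for every $w$ in the domain of $m$. *)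

(* Defs.v *)
From Stdlib Require List.
From mathcomp Require Import all_boot.
Set Implicit Arguments. Unset Strict Implicit. Unset Printing Implicit Defensive.

Inductive tsym (S1 : Type) : Type :=
| LEnd : tsym S1
| REnd : tsym S1
| Sym : S1 -> tsym S1.
Arguments LEnd {S1}. Arguments REnd {S1}.

Inductive move : Type := mL | mS | mR.

Record instr (Q S1 S2 : Type) : Type := Instr {
  i_p : Q;
  i_sigma : tsym S1;
  i_q1 : Q; i_alpha1 : seq S2; i_eps1 : move;
  i_q0 : Q; i_alpha0 : seq S2; i_eps0 : move }.

Record gsm2 (Q S1 S2 : finType) : Type := Gsm2 {
  delta : seq (instr Q S1 S2);
  q_in : Q;
  q_f : Q;
  delta_ok : forall t, List.In t delta -> i_p t <> q_f }.

(* symbol at position i of the tape |- w -| (positions 0 .. |w|+1) *)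
Definition tape (S1 : Type) (w : seq S1) (i : nat) : tsym S1 :=
  if i == 0 then LEnd
  else if i <= size w then
    match drop i.-1 w with x :: _ => Sym x | [::] => REnd end
  else REnd.

Definition do_move (S1 : Type) (w : seq S1) (i : nat) (e : move) : option nat :=
  match e with
  | mL => if i == 0 then None else Some i.-1
  | mS => Some i
  | mR => if i <= size w then Some i.+1 else None
  end.

Definition step (Q S1 S2 : finType) (M : gsm2 Q S1 S2) (w : seq S1)
    (p : Q) (i : nat) (q : Q) (j : nat) (a : seq S2) : Prop :=
  exists t, List.In t (delta M) /\ i_p t = p /\
    ((tape w i = i_sigma t /\
       [/\ q = i_q1 t, a = i_alpha1 t & do_move w i (i_eps1 t) = Some j]) \/
     (tape w i <> i_sigma t /\
       [/\ q = i_q0 t, a = i_alpha0 t & do_move w i (i_eps0 t) = Some j])).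

Inductive comp (Q S1 S2 : finType) (M : gsm2 Q S1 S2) (w : seq S1) :
    Q -> nat -> seq (Q * nat) -> seq S2 -> Prop :=
| comp_init : comp M w (q_in M) 0 [:: (q_in M, 0)] [::]
| comp_step p i cs z q j a :
    comp M w p i cs z -> step M w p i q j a ->
    comp M w q j (rcons cs (q, j)) (z ++ a).

Definition successful (Q S1 S2 : finType) (M : gsm2 Q S1 S2)
    (w : seq S1) (z : seq S2) (cs : seq (Q * nat)) : Prop :=
  exists i, comp M w (q_f M) i cs z.

Definition k_visiting (Q : Type) (k : nat) (cs : seq (Q * nat)) : Prop :=
  forall pos : nat, count (fun c => c.2 == pos) cs <= k.

Definition realizes (Q S1 S2 : finType) (M : gsm2 Q S1 S2)
    (m : seq S1 -> seq S2 -> Prop) : Prop :=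
  forall w z, m w z <-> exists cs, successful M w z cs.

Definition finite_visit (Q S1 S2 : finType) (M : gsm2 Q S1 S2) : Prop :=
  exists k : nat, forall w z, (exists cs, successful M w z cs) ->
    exists cs, successful M w z cs /\ k_visiting k cs.

Definition finitary (S1 S2 : eqType) (m : seq S1 -> seq S2 -> Prop) : Prop :=
  forall w, (exists z, m w z) -> exists s : seq (seq S2), forall z, m w z -> z \in s.

(* Main.v *)
From Pilot Require Import Defs.
From mathcomp Require Import all_boot.
From mathcomp Require Import zify.
Import Pilot.Defs.

Set Implicit Arguments. Unset Strict Implicit. Unset Printing Implicit Defensive.

Inductive run (Q S1 S2 : finType) (M : gsm2 Q S1 S2) (w : seq S1) :
  Q -> nat -> seq (Q * nat) -> seq S2 -> Q -> nat -> Prop :=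
| run_nil p i : run M w p i [::] [::] p i
| run_cons p i q j a cs z r k : step M w p i q j a -> run M w q j cs z r k ->
    run M w p i ((q, j) :: cs) (a ++ z) r k.

Lemma run_rcons (Q S1 S2 : finType) (M : gsm2 Q S1 S2) w p i cs z q j r k a :
  run M w p i cs z q j -> step M w q j r k a ->
  run M w p i (rcons cs (r, k)) (z ++ a) r k.
Proof.
elim=> [p0 i0|p0 i0 q0 j0 a0 cs0 z0 r0 k0 st _ IH] st'.
  by rewrite /= -[a]cats0; apply: run_cons => //; apply: run_nil.
by rewrite /= -catA; apply: run_cons => //; apply: IH.
Qed.

Lemma run_cat (Q S1 S2 : finType) (M : gsm2 Q S1 S2) w p i cs1 z1 q j cs2 z2 r k :
  run M w p i cs1 z1 q j -> run M w q j cs2 z2 r k ->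
  run M w p i (cs1 ++ cs2) (z1 ++ z2) r k.
Proof.
elim=> [//|p0 i0 q0 j0 a0 cs0 z0 r0 k0 st _ IH] H.
by rewrite /= -catA; apply: run_cons => //; apply: IH.
Qed.

Lemma run_comp (Q S1 S2 : finType) (M : gsm2 Q S1 S2) w p i cs z q j :
  run M w p i cs z q j -> forall cs0 z0, comp M w p i cs0 z0 ->
  comp M w q j (cs0 ++ cs) (z0 ++ z).
Proof.
elim=> [p0 i0|p0 i0 q0 j0 a0 cs' z' r0 k0 st _ IH] cs0 z0 C.
  by rewrite !cats0.
rewrite -cat_rcons catA; apply: IH; exact: comp_step C st.
Qed.

Lemma comp_run (Q S1 S2 : finType) (M : gsm2 Q S1 S2) w q i cs z :
  comp M w q i cs z -> exists cs', cs = (q_in M, 0) :: cs' /\ run M w (q_in M) 0 cs' z q i.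
Proof.
elim=> [|p i0 cs0 z0 q0 j a _ [cs' [-> R]] st].
  by exists [::]; split => //; apply: run_nil.
exists (rcons cs' (q0, j)); split => //; exact: run_rcons R st.
Qed.

Lemma run_split (Q S1 S2 : finType) (M : gsm2 Q S1 S2) w A : forall p i cs z r k q j D,
  (p, i) :: cs = A ++ (q, j) :: D -> run M w p i cs z r k ->
  exists z1 z2 cs1, [/\ run M w p i cs1 z1 q j, run M w q j D z2 r k,
     z = z1 ++ z2 & size cs1 = size A].
Proof.
elim: A => [|a A IH] p i cs z r k q j D /= E R.
  case: E => ? ? ?; subst; exists [::], z, [::]; split => //; exact: run_nil.
case: E => Ea E.
case: R E => [p0 i0|p0 i0 q0 j0 a0 cs0 z0 r0 k0 st R] E.
  by case: A E {IH}.
have [z1 [z2 [cs1 [R1 R2 -> S]]]] := IH _ _ _ _ _ _ _ _ _ E R.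
exists (a0 ++ z1), z2, ((q0, j0) :: cs1); split => //; last by rewrite /= S.
  exact: run_cons st R1.
by rewrite catA.
Qed.

Lemma run_pow (Q S1 S2 : finType) (M : gsm2 Q S1 S2) w q j cs z n :
  run M w q j cs z q j ->
  run M w q j (flatten (nseq n cs)) (flatten (nseq n z)) q j.
Proof.
move=> R; elim: n => [|n IH] /=; first exact: run_nil.
exact: run_cat R IH.
Qed.

Lemma not_uniq_split (T : eqType) (s : seq T) : ~~ uniq s ->
  exists A x B C, s = A ++ x :: B ++ x :: C.
Proof.
elim: s => [//|y s IH] /=; rewrite negb_and negbK.
case: (boolP (y \in s)) => [ys _|_ /= /IH [A [x [B [C ->]]]]].
  by case/splitPr: ys => p1 p2; exists [::], y, p1, p2.
by exists (y :: A), x, B, C.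
Qed.

Lemma not_uniq_split' (Q : finType) (s : seq (Q * nat)) : ~~ uniq s ->
  exists (A B C : seq (Q * nat)) (q : Q) (j : nat), s = A ++ (q, j) :: B ++ (q, j) :: C.
Proof.
move=> /not_uniq_split [A [[q j] [B [C E]]]]; by exists A, B, C, q, j.
Qed.

Lemma size_flatten_nseq (T : Type) (x : seq T) k : size (flatten (nseq k x)) = k * size x.
Proof. by elim: k => [|k IH] //=; rewrite size_cat IH mulSn. Qed.

Lemma size_in_sumn (T : eqType) (s : seq (seq T)) z : z \in s -> size z <= sumn (map size s).
Proof.
elim: s => [//|y s IH]; rewrite inE => /orP [/eqP ->|/IH]; rewrite /=; lia.
Qed.

Lemma uniq_count (Q : finType) (s : seq (Q * nat)) pos : uniq s ->
  count (fun c => c.2 == pos) s <= #|Q|.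
Proof.
move=> U; rewrite -size_filter.
have U1 : uniq (filter (fun c => c.2 == pos) s) by exact: filter_uniq.
have U2 : uniq (map fst (filter (fun c => c.2 == pos) s)).
  rewrite map_inj_in_uniq // => [[a b] [c d]]; rewrite !mem_filter /=.
  by move=> /andP [/eqP -> _] /andP [/eqP -> _] /= ->.
rewrite -(size_map fst) -(card_uniqP U2); exact: max_card.
Qed.

Lemma fv_of_finitary (Q S1 S2 : finType) (M : gsm2 Q S1 S2) m :
  realizes M m -> finitary m -> finite_visit M.
Proof.
move=> Rm Fm; exists #|Q| => w z [cs0 [i0 C0]].
have [cs00 [_ R0]] := comp_run C0.
suff: forall n cs i, size cs <= n -> run M w (q_in M) 0 cs z (q_f M) i ->
    exists cs' i', run M w (q_in M) 0 cs' z (q_f M) i' /\ uniq ((q_in M, 0) :: cs').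
  move=> /(_ _ _ _ (leqnn _) R0) [cs' [i' [R U]]].
  exists ((q_in M, 0) :: cs'); split.
    by exists i'; have := run_comp R (comp_init M w).
  by move=> pos; apply: uniq_count.
elim=> [|n IH] cs i Sz R.
  case: cs Sz R => // _ R; exists [::], i; split => //.
case: (boolP (uniq ((q_in M, 0) :: cs))) => [U|NU].
  by exists cs, i.
have [A [B [C [q [j E]]]]] := not_uniq_split' NU.
have [z1 [z2 [cs1 [R1 R2 Ez S1']]]] := run_split E R.
have E2 : (q, j) :: B ++ (q, j) :: C = ((q, j) :: B) ++ (q, j) :: C by [].
have [z21 [z22 [cs2 [R21 R22 Ez2 S2']]]] := run_split E2 R2.
have Hsz : size cs = size A + size B + 1 + size C.
  have := congr1 size E; rewrite /= !size_cat /= size_cat /=; move=> H0; lia.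
case: (boolP (z21 == [::])) => [/eqP z21E|z21N].
  apply: (IH (cs1 ++ C) i); first by rewrite size_cat; lia.
  by rewrite Ez Ez2 z21E /=; apply: run_cat R1 R22.
exfalso.
have Hm : forall n, m w (z1 ++ (flatten (nseq n z21) ++ z22)).
  move=> k; apply/Rm; exists ((q_in M, 0) :: (cs1 ++ (flatten (nseq k cs2) ++ C))).
  exists i; have := run_comp (run_cat R1 (run_cat (run_pow k R21) R22)) (comp_init M w).
  by [].
have [s Hs] := Fm w (ex_intro _ _ (Hm 0)).
set N := sumn (map size s).
have Hz := size_in_sumn (Hs _ (Hm N.+1)).
move: Hz; rewrite size_cat size_cat size_flatten_nseq -/N.
have : size z21 > 0 by case: z21 z21N {R21 Ez2 Hm}.
clearbody N; move: (size z1) (size z21) (size z22) => a b c; nia.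
Qed.

Definition alphas (Q S1 S2 : finType) (M : gsm2 Q S1 S2) : seq (seq S2) :=
  flatten [seq [:: i_alpha1 t; i_alpha0 t] | t <- delta M].

Fixpoint outs (Q S1 S2 : finType) (M : gsm2 Q S1 S2) (n : nat) : seq (seq S2) :=
  match n with
  | 0 => [:: [::]]
  | n.+1 => outs M n ++ [seq x ++ a | x <- outs M n, a <- alphas M]
  end.

Lemma in_alphas (Q S1 S2 : finType) (M : gsm2 Q S1 S2) t :
  List.In t (delta M) -> (i_alpha1 t \in alphas M) && (i_alpha0 t \in alphas M).
Proof.
rewrite /alphas; elim: (delta M) => [//|t' l IH] /= [->|/IH /andP [H1 H2]].
  by rewrite !inE !eqxx !orbT.
by rewrite !inE H1 H2 !orbT.
Qed.

Lemma step_alpha (Q S1 S2 : finType) (M : gsm2 Q S1 S2) w p i q j a :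
  step M w p i q j a -> a \in alphas M.
Proof.
case=> t [In [_ [[_ [_ -> _]]|[_ [_ -> _]]]]]; have /andP [] := in_alphas In => //.
Qed.

Lemma outs_mono (Q S1 S2 : finType) (M : gsm2 Q S1 S2) n N z :
  n <= N -> z \in outs M n -> z \in outs M N.
Proof.
elim: N => [|N IH]; first by rewrite leqn0 => /eqP ->.
rewrite leq_eqVlt => /orP [/eqP -> //|]; rewrite ltnS => /IH H /H Hz; by rewrite /= mem_cat Hz.
Qed.

Lemma do_move_le (S1 : Type) (w : seq S1) i e j :
  do_move w i e = Some j -> i <= size w + 1 -> j <= size w + 1.
Proof.
case: e => /=.
- case: (i == 0) => //= -[<-]; lia.
- by case=> <-.
- case: ifP => // H [<-] _; lia.
Qed.

Lemma comp_outs (Q S1 S2 : finType) (M : gsm2 Q S1 S2) w q i cs z :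
  comp M w q i cs z -> z \in outs M (size cs) /\
    (i <= size w + 1 /\ all (fun c => c.2 <= size w + 1) cs).
Proof.
elim=> [|p i0 cs0 z0 q0 j a _ [IHz [IHi IHa]] st]; first by rewrite /= !inE.
rewrite size_rcons /= mem_cat.
have Hj : j <= size w + 1.
  by case: st => t [_ [_ [[_ [_ _ D]]|[_ [_ _ D]]]]]; apply: do_move_le D IHi.
split; first by apply/orP; right; apply: allpairs_f => //; exact: step_alpha st.
by split => //; rewrite all_rcons /= Hj.
Qed.

Lemma count_split (Q : Type) (cs : seq (Q * nat)) n :
  count (fun c => c.2 < n.+1) cs = count (fun c => c.2 < n) cs + count (fun c => c.2 == n) cs.
Proof.
elim: cs => [//|c cs IH] /=; rewrite IH ltnS leq_eqVlt.
case: (ltngtP c.2 n) => //= H; lia.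
Qed.

Lemma kvis_size (Q : Type) (cs : seq (Q * nat)) k n :
  k_visiting k cs -> all (fun c => c.2 < n) cs -> size cs <= k * n.
Proof.
move=> Kv Al.
have -> : size cs = count (fun c => c.2 < n) cs by move: Al; rewrite all_count => /eqP.
elim: n {Al} => [|n IH]; first by rewrite (@eq_count _ _ pred0) ?count_pred0.
rewrite count_split mulnS; have := Kv n; lia.
Qed.

Theorem lemma6p1 (S1 S2 : finType) (m : seq S1 -> seq S2 -> Prop) :
  (exists (Q : finType) (M : gsm2 Q S1 S2), finite_visit M /\ realizes M m)
  <->
  ((exists (Q : finType) (M : gsm2 Q S1 S2), realizes M m) /\ finitary m).
Proof.
split.
  move=> [Q [M [[k Hk] R]]]; split; first by exists Q, M.
  move=> w _; exists (outs M (k * (size w + 2))).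
  move=> z /R /Hk [cs [[i C] Kv]].
  have [Hz [_ Hall]] := comp_outs C.
  apply: outs_mono Hz; apply: kvis_size Kv _.
  by move: Hall; apply: sub_all => c /= H; lia.
move=> [[Q [M R]] F]; exists Q, M; split => //; exact: fv_of_finitary R F.
Qed.
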